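(* The category $\mathbf{OMLatGal}$ is a dagger kernel category. Its zero object is the one-element lattice, and the zero morphism $X\to Y$ is $z$ with $z_*(x)=1$, $z^*(y)=1$. The dagger kernel of a morphism $f:X\to Y$ is the morphism $k:\downarrow k\to X$ (as in the definition of downset morphisms below) where $k=f^*(1)\in X$.
   Context: An orthomodular lattice is a bounded lattice with an order-reversing involution $x\mapsto x^\perp$ such that $x\wedge x^\perp=0$, $x\vee x^\perp=1$, and $x\le y$ implies $y=x\vee(x^\perp\wedge y)$. The category $\mathbf{OMLatGal}$ has orthomodular lattices as objects; a morphism $f:X\to Y$ is a pair $(f_*,f^* )$ of order-reversing functions $f_*:X\to Y$, $f^*:Y\to X$ such that $y\le f_*(x)$ iff $x\le f^*(y)$ for all $x\in X,y\in Y$. The identity on $X$ is the pair whose both components are $x\mapsto x^\perp$. Composition of $f:X\to Y$ and $g:Y\to Z$ is $(g\circ f)_*=g_*\circ(-)^\perp\circ f_*$, $(g\circ f)^*=f^*\circ(-)^\perp\circ g^*$. The dagger is $(f_*,f^* )^\dagger=(f^*,f_* )$. For $a\in X$, $\downarrow a=\{u\in X:u\le a\}$ is an orthomodular lattice with the order, meets, joins of $X$ and complement $u^{\perp_a}=a\wedge u^\perp$; the downset morphism $a:\downarrow a\to X$ is given by $a_*(u)=u^\perp$, $a^*(x)=a\wedge x^\perp$. A dagger kernel category is a dagger category with a zero object in which every morphism has a kernel that is a dagger mono ($k^\dagger\circ k=\mathrm{id}$). *)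

(* Defs.v *)
Set Implicit Arguments.

Record OLat : Type := {
  car :> Type;
  le : car -> car -> Prop;
  meet : car -> car -> car;
  join : car -> car -> car;
  bot : car;
  top : car;
  orth : car -> car }.

Arguments le {o} _ _.
Arguments meet {o} _ _.
Arguments join {o} _ _.
Arguments bot {o}.
Arguments top {o}.
Arguments orth {o} _.

Record is_OML (X : OLat) : Prop := {
  oml_refl : forall x : X, le x x;
  oml_antisym : forall x y : X, le x y -> le y x -> x = y;
  oml_trans : forall x y z : X, le x y -> le y z -> le x z;
  oml_meet_l : forall x y : X, le (meet x y) x;
  oml_meet_r : forall x y : X, le (meet x y) y;
  oml_meet_glb : forall x y z : X, le z x -> le z y -> le z (meet x y);
  oml_join_l : forall x y : X, le x (join x y);
  oml_join_r : forall x y : X, le y (join x y);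
  oml_join_lub : forall x y z : X, le x z -> le y z -> le (join x y) z;
  oml_bot : forall x : X, le bot x;
  oml_top : forall x : X, le x top;
  oml_orth_anti : forall x y : X, le x y -> le (orth y) (orth x);
  oml_orth_invol : forall x : X, orth (orth x) = x;
  oml_orth_meet : forall x : X, meet x (orth x) = bot;
  oml_orth_join : forall x : X, join x (orth x) = top;
  oml_orthomod : forall x y : X, le x y -> y = join x (meet (orth x) y) }.

(** Morphisms of OMLatGal: pairs (f_*, f^* ). *)
Record Gal (X Y : OLat) : Type := { gs : X -> Y ; gu : Y -> X }.
Arguments gs {X Y} _ _.
Arguments gu {X Y} _ _.

Definition is_Gal {X Y : OLat} (f : Gal X Y) : Prop :=
  (forall x x' : X, le x x' -> le (gs f x') (gs f x)) /\
  (forall y y' : Y, le y y' -> le (gu f y') (gu f y)) /\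
  (forall (x : X) (y : Y), le y (gs f x) <-> le x (gu f y)).

Definition gid (X : OLat) : Gal X X := {| gs := @orth X; gu := @orth X |}.

Definition gcomp {X Y Z : OLat} (g : Gal Y Z) (f : Gal X Y) : Gal X Z :=
  {| gs := fun x => gs g (orth (gs f x));
     gu := fun z => gu f (orth (gu g z)) |}.

Definition gdag {X Y : OLat} (f : Gal X Y) : Gal Y X :=
  {| gs := gu f; gu := gs f |}.

Definition unitOL : OLat :=
  {| car := unit; le := fun _ _ => True; meet := fun _ _ => tt;
     join := fun _ _ => tt; bot := tt; top := tt; orth := fun _ => tt |}.

Definition gzero (X Y : OLat) : Gal X Y :=
  {| gs := fun _ => top; gu := fun _ => top |}.

Section Downset.
Variables (X : OLat) (HX : is_OML X) (a : X).

Definition dcar := { u : X | le u a }.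

Lemma d_meet_pf (u v : dcar) : le (meet (proj1_sig u) (proj1_sig v)) a.
Proof. exact (oml_trans HX _ _ _ (oml_meet_l HX _ _) (proj2_sig u)). Qed.

Lemma d_join_pf (u v : dcar) : le (join (proj1_sig u) (proj1_sig v)) a.
Proof. exact (oml_join_lub HX _ _ _ (proj2_sig u) (proj2_sig v)). Qed.

Lemma d_bot_pf : le (@bot X) a.
Proof. exact (oml_bot HX a). Qed.

Lemma d_top_pf : le a a.
Proof. exact (oml_refl HX a). Qed.

Lemma d_meet_a_pf (x : X) : le (meet a x) a.
Proof. exact (oml_meet_l HX a x). Qed.

Definition downset : OLat :=
  {| car := dcar;
     le := fun u v => le (proj1_sig u) (proj1_sig v);
     meet := fun u v => exist (fun w : X => le w a) _ (d_meet_pf u v);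
     join := fun u v => exist (fun w : X => le w a) _ (d_join_pf u v);
     bot := exist (fun w : X => le w a) _ d_bot_pf;
     top := exist (fun w : X => le w a) _ d_top_pf;
     orth := fun u => exist (fun w : X => le w a) _ (d_meet_a_pf (orth (proj1_sig u))) |}.

Definition downmor : Gal downset X :=
  {| gs := fun u : downset => orth (proj1_sig (u : dcar));
     gu := fun x : X => (exist (fun w : X => le w a) _ (d_meet_a_pf (orth x)) : downset) |}.

End Downset.

Arguments downset {X} HX a.
Arguments downmor {X} HX a.

Definition is_kernel {K X Y : OLat} (f : Gal X Y) (k : Gal K X) : Prop :=
  gcomp f k = gzero K Y /\
  forall (Z : OLat), is_OML Z -> forall g : Gal Z X, is_Gal g ->
    gcomp f g = gzero Z Y ->
    exists! h : Gal Z K, is_Gal h /\ gcomp k h = g.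

(* Main.v *)
Require Import Defs.
From Stdlib Require Import FunctionalExtensionality ProofIrrelevance Setoid.
Set Implicit Arguments.

Section OMLfacts.
Variables (X : OLat) (HX : is_OML X).

Lemma swap (x y : X) : le y (orth x) -> le x (orth y).
Proof. intro H. rewrite <- (oml_orth_invol HX x) at 1. apply (oml_orth_anti HX); auto. Qed.

Lemma swap2 (x y : X) : le (orth x) y -> le (orth y) x.
Proof. intro H. rewrite <- (oml_orth_invol HX x). apply (oml_orth_anti HX); auto. Qed.

Lemma meetC (x y : X) : meet x y = meet y x.
Proof. apply (oml_antisym HX); apply (oml_meet_glb HX);
  first [apply (oml_meet_l HX) | apply (oml_meet_r HX)]. Qed.

Lemma orth_meet (x y : X) : orth (meet x y) = join (orth x) (orth y).
Proof.
  apply (oml_antisym HX).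
  - rewrite <- (oml_orth_invol HX (join _ _)). apply (oml_orth_anti HX).
    apply (oml_meet_glb HX).
    + apply swap2. apply (oml_join_l HX).
    + apply swap2. apply (oml_join_r HX).
  - apply (oml_join_lub HX); apply (oml_orth_anti HX);
      first [apply (oml_meet_l HX) | apply (oml_meet_r HX)].
Qed.

Lemma orth_join (p q : X) : orth (join p q) = meet (orth p) (orth q).
Proof.
  rewrite <- (oml_orth_invol HX (meet _ _)). rewrite orth_meet, !(oml_orth_invol HX). reflexivity.
Qed.

Lemma key (u a : X) : le u a -> meet a (orth (meet a (orth u))) = u.
Proof.
  intro H.
  assert (H2 : le (orth a) (orth u)) by (apply (oml_orth_anti HX); auto).
  pose proof (oml_orthomod HX _ _ H2) as E.
  rewrite (oml_orth_invol HX) in E.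
  remember (meet a (orth u)) as w. clear Heqw.
  rewrite <- (oml_orth_invol HX u). rewrite E, orth_join, (oml_orth_invol HX). reflexivity.
Qed.

Lemma eq_le (x y : X) : x = y -> le x y.
Proof. intros ->; apply (oml_refl HX). Qed.

End OMLfacts.

Lemma dsig_eq (X : OLat) (a : X) (u v : {w : X | le w a}) : proj1_sig u = proj1_sig v -> u = v.
Proof. destruct u, v; simpl; intros ->. f_equal; apply proof_irrelevance. Qed.

Lemma downset_OML (X : OLat) (HX : is_OML X) (a : X) : is_OML (downset HX a).
Proof.
  constructor; simpl; intros.
  - apply (oml_refl HX).
  - apply dsig_eq. apply (oml_antisym HX); auto.
  - eapply (oml_trans HX); eauto.
  - apply (oml_meet_l HX).
  - apply (oml_meet_r HX).
  - apply (oml_meet_glb HX); auto.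
  - apply (oml_join_l HX).
  - apply (oml_join_r HX).
  - apply (oml_join_lub HX); auto.
  - apply (oml_bot HX).
  - exact (proj2_sig x).
  - apply (oml_meet_glb HX). apply (oml_meet_l HX).
    eapply (oml_trans HX). apply (oml_meet_r HX). apply (oml_orth_anti HX); auto.
  - apply dsig_eq; simpl. apply (key HX). exact (proj2_sig x).
  - apply dsig_eq; simpl. apply (oml_antisym HX); [|apply (oml_bot HX)].
    rewrite <- (oml_orth_meet HX (proj1_sig x)). apply (oml_meet_glb HX).
    apply (oml_meet_l HX). eapply (oml_trans HX). apply (oml_meet_r HX). apply (oml_meet_r HX).
  - apply dsig_eq; simpl. rewrite (meetC HX). symmetry. apply (oml_orthomod HX). exact (proj2_sig x).
  - apply dsig_eq; simpl. destruct x as [x Hx], y as [y Hy]; simpl in *.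
    replace (meet (meet a (orth x)) y) with (meet (orth x) y).
    + apply (oml_orthomod HX); auto.
    + apply (oml_antisym HX).
      * apply (oml_meet_glb HX). apply (oml_meet_glb HX).
        eapply (oml_trans HX). apply (oml_meet_r HX). auto. apply (oml_meet_l HX). apply (oml_meet_r HX).
      * apply (oml_meet_glb HX). eapply (oml_trans HX). apply (oml_meet_l HX). apply (oml_meet_r HX).
        apply (oml_meet_r HX).
Qed.

Lemma gal_eq (X Y : OLat) (f g : Gal X Y) : (forall x, gs f x = gs g x) -> (forall y, gu f y = gu g y) -> f = g.
Proof. destruct f, g; simpl; intros H1 H2.
  apply functional_extensionality in H1. apply functional_extensionality in H2. subst; reflexivity. Qed.

Lemma gal_unique_u (X Y : OLat) (HX : is_OML X) (f g : Gal X Y) :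
  is_Gal f -> is_Gal g -> (forall x, gs f x = gs g x) -> forall y, gu f y = gu g y.
Proof.
  intros [_ [_ Af]] [_ [_ Ag]] E y. apply (oml_antisym HX).
  - apply Ag. rewrite <- E. apply Af. apply (oml_refl HX).
  - apply Af. rewrite E. apply Ag. apply (oml_refl HX).
Qed.

Lemma gid_Gal X (HX : is_OML X) : is_Gal (gid X).
Proof. split; [|split]; simpl; intros; try (apply (oml_orth_anti HX); auto).
  split; apply swap; auto. Qed.

Lemma gcomp_Gal (X Y Z : OLat) (f : Gal X Y) (g : Gal Y Z) :
  is_OML X -> is_OML Y -> is_OML Z -> is_Gal f -> is_Gal g -> is_Gal (gcomp g f).
Proof.
  intros HX HY HZ [f1 [f2 f3]] [g1 [g2 g3]]. split; [|split]; simpl; intros.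
  - apply g1, (oml_orth_anti HY), f1; auto.
  - apply f2, (oml_orth_anti HY), g2; auto.
  - rewrite g3. rewrite <- f3. split; intro H.
    + apply swap2; auto. + apply swap2 in H; auto.
Qed.

Lemma unit_OML : is_OML unitOL.
Proof. constructor; simpl; intros; auto; try (destruct x; try destruct y; reflexivity);
  destruct x; reflexivity. Qed.

Lemma to_unit X (HX : is_OML X) : exists! t : Gal X unitOL, is_Gal t.
Proof.
  exists (Build_Gal X unitOL (fun _ => tt : unitOL) (fun _ => top)). split.
  - split; [|split]; simpl; intros; auto. apply (oml_refl HX). split; intros; auto. apply (oml_top HX).
  - intros t [_ [_ A]]. apply gal_eq; simpl; intros. destruct (gs t x); reflexivity.
    destruct y. apply (oml_antisym HX). apply A; exact I. apply (oml_top HX).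
Qed.

Lemma from_unit X (HX : is_OML X) : exists! s : Gal unitOL X, is_Gal s.
Proof.
  exists (Build_Gal unitOL X (fun _ => top) (fun _ => tt : unitOL)). split.
  - split; [|split]; simpl; intros; auto. apply (oml_refl HX). split; intros; auto. apply (oml_top HX).
  - intros t [_ [_ A]]. apply gal_eq; simpl; intros.
    destruct x. apply (oml_antisym HX). apply A; exact I. apply (oml_top HX).
    destruct (gu t y); reflexivity.
Qed.

Lemma zero_fact (X Y : OLat) (t : Gal X unitOL) (s : Gal unitOL Y) :
  is_OML X -> is_OML Y -> is_Gal t -> is_Gal s -> gcomp s t = gzero X Y.
Proof.
  intros HX HY [_ [_ At]] [_ [_ As]]. apply gal_eq; simpl; intros.
  - destruct (orth (gs t x)). apply (oml_antisym HY). apply (oml_top HY). apply As; exact I.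
  - destruct (orth (gu s y)). apply (oml_antisym HX). apply (oml_top HX). apply At; exact I.
Qed.

Section Kernel.
Variables (X Y : OLat) (HX : is_OML X) (HY : is_OML Y) (f : Gal X Y) (Hf : is_Gal f).
Let a := gu f top.

Lemma downmor_Gal : is_Gal (downmor HX a).
Proof.
  split; [|split]; simpl; intros.
  - apply (oml_orth_anti HX); auto.
  - apply (oml_meet_glb HX). apply (oml_meet_l HX).
    eapply (oml_trans HX). apply (oml_meet_r HX). apply (oml_orth_anti HX); auto.
  - split; intro H.
    + apply (oml_meet_glb HX). exact (proj2_sig x). apply swap; auto.
    + apply swap; auto. eapply (oml_trans HX). exact H. apply (oml_meet_r HX).
Qed.

Lemma ker_zero : gcomp f (downmor HX a) = gzero (downset HX a) Y.
Proof.
  destruct Hf as [f1 [f2 f3]].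
  apply gal_eq; simpl; intros.
  - rewrite (oml_orth_invol HX). apply (oml_antisym HY). apply (oml_top HY).
    apply f3. exact (proj2_sig x).
  - apply dsig_eq; simpl. rewrite (oml_orth_invol HX). apply (oml_antisym HX).
    apply (oml_meet_l HX). apply (oml_meet_glb HX). apply (oml_refl HX).
    apply f2, (oml_top HY).
Qed.

Lemma dag_ker : gcomp (gdag (downmor HX a)) (downmor HX a) = gid (downset HX a).
Proof.
  apply gal_eq; simpl; intros; apply dsig_eq; simpl; rewrite (oml_orth_invol HX); reflexivity.
Qed.

Lemma ker_univ (Z : OLat) (HZ : is_OML Z) (g : Gal Z X) (Hg : is_Gal g) :
  gcomp f g = gzero Z Y -> exists! h : Gal Z (downset HX a), is_Gal h /\ gcomp (downmor HX a) h = g.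
Proof.
  intro E.
  assert (Ha : forall z, le (orth (gs g z)) a).
  { intro z. apply (proj2 (proj2 Hf)). apply (f_equal (fun h => gs h z)) in E. simpl in E.
    rewrite E. apply (oml_refl HY). }
  pose proof (downset_OML HX a) as HK.
  destruct Hg as [g1 [g2 g3]].
  set (h := {| gs := fun z => (exist (fun w : X => le w a) (meet a (gs g z)) (oml_meet_l HX _ _) : downset HX a);
               gu := fun u : downset HX a => gu g (proj1_sig (u : dcar X a)) |}).
  assert (Hh : is_Gal h).
  { split; [|split]; simpl; intros.
    - apply (oml_meet_glb HX). apply (oml_meet_l HX).
      eapply (oml_trans HX). apply (oml_meet_r HX). auto.
    - apply g2; auto.
    - rewrite <- g3. split; intro H.
      + eapply (oml_trans HX). exact H. apply (oml_meet_r HX).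
      + apply (oml_meet_glb HX). exact (proj2_sig y). auto. }
  assert (Hs : forall z, gs (gcomp (downmor HX a) h) z = gs g z).
  { intro z. simpl. rewrite <- (oml_orth_invol HX (gs g z)) at 2. f_equal.
    pose proof (@key _ HX _ _ (Ha z)) as K. rewrite (oml_orth_invol HX) in K. exact K. }
  assert (Hgal : is_Gal g) by (split; auto).
  exists h. split.
  - split; auto. apply gal_eq; auto. apply (gal_unique_u HZ); auto.
    apply gcomp_Gal; auto. apply downmor_Gal.
  - intros h' [Hh' E']. assert (Hs' : forall z, gs h z = gs h' z).
    { intro z. apply dsig_eq. simpl.
      apply (f_equal (fun k => gs k z)) in E'. simpl in E'.
      rewrite <- (@key _ HX _ _ (proj2_sig (gs h' z))).
      rewrite E'. reflexivity. }
    apply gal_eq; auto. apply (gal_unique_u HZ); auto.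
Qed.

End Kernel.
Theorem mainTheorem3 :
  (* OMLatGal is a category *)
  (forall X : OLat, is_OML X -> is_Gal (gid X)) /\
  (forall (X Y Z : OLat) (f : Gal X Y) (g : Gal Y Z),
      is_OML X -> is_OML Y -> is_OML Z -> is_Gal f -> is_Gal g ->
      is_Gal (gcomp g f)) /\
  (forall (X Y : OLat) (f : Gal X Y),
      is_OML X -> is_OML Y -> is_Gal f ->
      gcomp f (gid X) = f /\ gcomp (gid Y) f = f) /\
  (forall (W X Y Z : OLat) (f : Gal W X) (g : Gal X Y) (h : Gal Y Z),
      is_OML W -> is_OML X -> is_OML Y -> is_OML Z ->
      is_Gal f -> is_Gal g -> is_Gal h ->
      gcomp h (gcomp g f) = gcomp (gcomp h g) f) /\
  (* the dagger makes it a dagger category *)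
  (forall (X Y : OLat) (f : Gal X Y),
      is_OML X -> is_OML Y -> is_Gal f -> is_Gal (gdag f)) /\
  (forall (X Y : OLat) (f : Gal X Y), gdag (gdag f) = f) /\
  (forall X : OLat, gdag (gid X) = gid X) /\
  (forall (X Y Z : OLat) (f : Gal X Y) (g : Gal Y Z),
      gdag (gcomp g f) = gcomp (gdag f) (gdag g)) /\
  (* the one-element lattice is a zero object *)
  is_OML unitOL /\
  (forall X : OLat, is_OML X -> exists! t : Gal X unitOL, is_Gal t) /\
  (forall X : OLat, is_OML X -> exists! s : Gal unitOL X, is_Gal s) /\
  (* the zero morphism X -> Y (factoring through unitOL) is gzero *)
  (forall (X Y : OLat) (t : Gal X unitOL) (s : Gal unitOL Y),
      is_OML X -> is_OML Y -> is_Gal t -> is_Gal s ->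
      gcomp s t = gzero X Y) /\
  (* every morphism has a dagger kernel, namely the downset morphism of f^*(1) *)
  (forall (X Y : OLat) (HX : is_OML X) (HY : is_OML Y) (f : Gal X Y),
      is_Gal f ->
      is_OML (downset HX (gu f top)) /\
      is_Gal (downmor HX (gu f top)) /\
      is_kernel f (downmor HX (gu f top)) /\
      gcomp (gdag (downmor HX (gu f top))) (downmor HX (gu f top))
        = gid (downset HX (gu f top))).
Proof.
  split; [exact gid_Gal|].
  split; [exact gcomp_Gal|].
  split.
  { intros X Y f HX HY _. split; apply gal_eq; simpl; intros; rewrite ?(oml_orth_invol HX), ?(oml_orth_invol HY); reflexivity. }
  split; [reflexivity|].
  split.
  { intros X Y f HX HY [f1 [f2 f3]]. split; [|split]; simpl; auto. intros; symmetry; apply f3. }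
  split; [intros X Y [f1 f2]; reflexivity|].
  split; [reflexivity|].
  split; [reflexivity|].
  split; [exact unit_OML|].
  split; [exact to_unit|].
  split; [exact from_unit|].
  split; [exact zero_fact|].
  intros X Y HX HY f Hf.
  split; [apply downset_OML|].
  split; [apply downmor_Gal|].
  split; [split; [apply ker_zero; auto | intros; apply ker_univ; auto]|].
  apply dag_ker.
Qed.
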